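(* Let $(J,S)$ be a homogeneous $d$-dimensional multi-time Markov renewal chain with semi-Markov kernel $q$ and $u=\sum_{n\ge0}q^{(n)}$. Then $\mathrm{dg}(u)$ is convolutionally invertible, $u=\mathbbm{I}_s+g*\mathrm{dg}(u)$, and $$g=(u-\mathbbm{I}_s)*\mathrm{dg}(u)^{(-1)}.$$
   Context: $E=\{1,\dots,s\}$; $\mathcal{M}_s(\mathbb{N}^d)$ is the set of functions $\mathbb{N}^d\to\mathbb{R}^{s\times s}$ with convolution $[A*B](k)=\sum_{l+l'=k}A(l)B(l')$, identity $\mathbbm{I}_s$ ($I_s$ at $0_d$, zero elsewhere), powers $A^{(0)}=\mathbbm{I}_s$, $A^{(n)}=A*A^{(n-1)}$, convolutional inverse $A^{(-1)}$. $\mathbb{N}^d$ has the componentwise partial order, $k<l$ meaning $k\le l$, $k\ne l$. A homogeneous $d$-dimensional multi-time Markov renewal chain is a process $(J_n,S_n)_{n\in\mathbb{N}}$, $J_n\in E$, $S_n\in\mathbb{N}^d$, $S_0=0_d$, $S_n<S_{n+1}$, with a.s. $\mathbb{P}(J_{n+1}=j,S_{n+1}-S_n=k\mid J_{0:n},S_{0:n})=q_{J_nj}(k)$, $q_{ij}(k)=\mathbb{P}(J_{n+1}=j,S_{n+1}-S_n=k\mid J_n=i)$ independent of $n$. $\mathbb{P}_i$ denotes probability given $J_0=i$. $\mathrm{dg}(u)$ is the diagonal matrix sequence with diagonal entries $u_{jj}$. For $i,j\in E$, $g_{ij}(k)=\mathbb{P}_i(S_{m_j}=k)$ where $m_j=\min\{l\ge1:J_l=j\}$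 (first hitting time of $j$; for $i=j$ the recurrence time of $j$); $g=(g_{ij})$. *)

(* Defs.v *)
From HB Require Import structures.
From mathcomp Require Import all_boot all_order all_algebra.
From mathcomp Require Import all_classical all_reals all_analysis.
Set Implicit Arguments. Unset Strict Implicit. Unset Printing Implicit Defensive.
Import Order.TTheory GRing.Theory Num.Theory.
Local Open Scope classical_set_scope.
Local Open Scope ring_scope.

Definition vec (d : nat) := {ffun 'I_d -> nat}.
Definition vzero (d : nat) : vec d := [ffun => 0%N].
Definition vadd (d : nat) (a b : vec d) : vec d := [ffun t => (a t + b t)%N].
Definition vle (d : nat) (a b : vec d) : bool := [forall t, (a t <= b t)%N].
Definition vlt (d : nat) (a b : vec d) : bool := vle a b && (a != b).

(* the finite list of all l in N^d with l <= k *)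
Definition box (d : nat) (k : vec d) : seq (vec d) :=
  [seq l <- [seq [ffun t => (f t : nat)] | f : {ffun 'I_d -> 'I_(\max_(t < d) k t).+1}]
     | vle l k].

Definition mseq (R : nzRingType) (d s : nat) := vec d -> 'M[R]_s.

Definition mconv (R : nzRingType) (d s : nat) (A B : mseq R d s) : mseq R d s :=
  fun k => \sum_(l <- box k) \sum_(l' <- box k | vadd l l' == k) (A l *m B l').

Definition Id_seq (R : nzRingType) (d s : nat) : mseq R d s :=
  fun k => if k == vzero d then 1%:M else 0.
Arguments Id_seq R d s : clear implicits.

Definition msub (R : nzRingType) (d s : nat) (A B : mseq R d s) : mseq R d s :=
  fun k => A k - B k.
Definition madd (R : nzRingType) (d s : nat) (A B : mseq R d s) : mseq R d s :=
  fun k => A k + B k.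

Fixpoint conv_pow (R : nzRingType) (d s : nat) (A : mseq R d s) (n : nat) : mseq R d s :=
  match n with
  | 0 => Id_seq R d s
  | n'.+1 => mconv A (conv_pow A n')
  end.

Definition conv_inverse (R : nzRingType) (d s : nat) (A B : mseq R d s) : Prop :=
  mconv B A = Id_seq R d s /\ mconv A B = Id_seq R d s.

Definition mdg (R : nzRingType) (d s : nat) (A : mseq R d s) : mseq R d s :=
  fun k => \matrix_(i, j) (if i == j then A k i i else 0).

Definition useq (R : realType) (d s : nat) (q : mseq R d s) : mseq R d s :=
  fun k => \matrix_(i, j) limn (fun N => \sum_(0 <= n < N) conv_pow q n k i j).

(* Conditional probabilities given the (discrete)
   past are written in product form. *)
Definition is_MRC (R : realType) (d s : nat) (dT : measure_display)
  (T : measurableType dT) (P : 'I_s -> probability T R)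
  (J : nat -> T -> 'I_s) (S : nat -> T -> vec d) (q : mseq R d s) : Prop :=
     (forall n j, measurable [set w | J n w = j])
  /\ (forall n k, measurable [set w | S n w = k])
  /\ (forall i, P i [set w | J 0 w = i] = 1%E)
  /\ (forall i, P i [set w | S 0 w = vzero d] = 1%E)
  /\ (forall i n, P i [set w | vlt (S n w) (S n.+1 w)] = 1%E)
  /\
      (forall i n (js : nat -> 'I_s) (ks : nat -> vec d) j k,
          P i [set w | (forall m, (m <= n)%N -> J m w = js m /\ S m w = ks m)
                       /\ J n.+1 w = j /\ S n.+1 w = vadd (ks n) k]
          = (P i [set w | forall m, (m <= n)%N -> J m w = js m /\ S m w = ks m]
             * (q k (js n) j)%:E)%E).

Definition gseq (R : realType) (d s : nat) (dT : measure_display)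
  (T : measurableType dT) (P : 'I_s -> probability T R)
  (J : nat -> T -> 'I_s) (S : nat -> T -> vec d) : mseq R d s :=
  fun k => \matrix_(i, j)
    fine (P i [set w | exists l, [/\ (0 < l)%N, J l w = j,
                                     (forall l', (0 < l' < l)%N -> J l' w <> j)
                                     & S l w = k]]).

(* Main.v *)
Require Import Defs.
From HB Require Import structures.
From mathcomp Require Import all_boot all_order all_algebra.
From mathcomp Require Import all_classical all_reals all_analysis.
From Stdlib Require Import Lia.
From mathcomp Require Import zify.
Set Implicit Arguments. Unset Strict Implicit. Unset Printing Implicit Defensive.
Import Order.TTheory GRing.Theory Num.Theory.
Local Open Scope ring_scope.

Section Vec.
Variable d : nat.
Implicit Types a b k l : vec d.

Definition vsub k l : vec d := [ffun t => (k t - l t)%N].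
Definition vnorm k : nat := (\sum_(t < d) k t)%N.

Lemma vleP a b : reflect (forall t, a t <= b t)%N (vle a b).
Proof. exact: forallP. Qed.

Lemma vle_refl a : vle a a.
Proof. by apply/vleP. Qed.

Lemma vle_trans a b c : vle a b -> vle b c -> vle a c.
Proof. by move=> /vleP h1 /vleP h2; apply/vleP => t; apply: leq_trans (h1 t) (h2 t). Qed.

Lemma vle_anti a b : vle a b -> vle b a -> a = b.
Proof. move=> /vleP h1 /vleP h2; apply/ffunP => t; apply/eqP; rewrite eqn_leq h1 h2. done. Qed.

Lemma vaddC a b : vadd a b = vadd b a.
Proof. by apply/ffunP => t; rewrite !ffunE addnC. Qed.

Lemma vaddA a b c : vadd a (vadd b c) = vadd (vadd a b) c.
Proof. by apply/ffunP => t; rewrite !ffunE addnA. Qed.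

Lemma vadd0 a : vadd a (vzero d) = a.
Proof. by apply/ffunP => t; rewrite !ffunE addn0. Qed.

Lemma vsubK a b : vle a b -> vadd a (vsub b a) = b.
Proof. by move=> /vleP h; apply/ffunP => t; rewrite !ffunE subnKC. Qed.

Lemma vaddK a b : vsub (vadd a b) a = b.
Proof. by apply/ffunP => t; rewrite !ffunE addKn. Qed.

Lemma vle_addr a b : vle a (vadd a b).
Proof. by apply/vleP => t; rewrite ffunE leq_addr. Qed.

Lemma vle_sub a b : vle (vsub a b) a.
Proof. by apply/vleP => t; rewrite ffunE leq_subr. Qed.

Lemma vsub_le a b c : vle b a -> vle (vsub a b) c = vle a (vadd b c).
Proof.
move=> /vleP h; apply/vleP/vleP => H t; move: (H t) (h t); rewrite !ffunE; lia.
Qed.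

Lemma vle_subl a b c : vle a b -> vle b c -> vle (vsub c b) (vsub c a).
Proof. move=> /vleP h1 /vleP h2; apply/vleP => t; rewrite !ffunE; move: (h1 t) (h2 t); lia. Qed.

Lemma vsubB a b c : vle a b -> vle b c -> vsub (vsub c a) (vsub b a) = vsub c b.
Proof. move=> /vleP h1 /vleP h2; apply/ffunP => t; rewrite !ffunE; move: (h1 t) (h2 t); lia. Qed.

Lemma vnormD a b : vnorm (vadd a b) = (vnorm a + vnorm b)%N.
Proof. by rewrite /vnorm -big_split /=; apply: eq_bigr => t _; rewrite ffunE. Qed.

Lemma vnorm_sub a b : vle b a -> vnorm (vsub a b) = (vnorm a - vnorm b)%N.
Proof. move=> h; rewrite -{2}(vsubK h) vnormD; lia. Qed.

Lemma vnorm_le a b : vle a b -> (vnorm a <= vnorm b)%N.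
Proof. by move=> h; rewrite -(vsubK h) vnormD leq_addr. Qed.

Lemma vnorm0 a : (vnorm a == 0%N) = (a == vzero d).
Proof.
apply/eqP/eqP => [h|->]; last by rewrite /vnorm big1 // => t _; rewrite ffunE.
apply/ffunP => t; rewrite ffunE; apply/eqP; rewrite -leqn0 -h /vnorm.
by rewrite (bigD1 t) //= leq_addr.
Qed.

Lemma vlt_norm a b : vlt a b -> (vnorm a < vnorm b)%N.
Proof.
move=> /andP[h ne]; rewrite -(vsubK h) vnormD -addn1 leq_add2l lt0n vnorm0.
apply: contra ne => /eqP e; by rewrite -(vsubK h) e vadd0.
Qed.

Lemma vle0 a : vle (vzero d) a.
Proof. by apply/vleP => t; rewrite ffunE. Qed.

Lemma vsub0 a : vsub a (vzero d) = a.
Proof. by apply/ffunP => t; rewrite !ffunE subn0. Qed.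

Lemma vsubxx a : vsub a a = vzero d.
Proof. by apply/ffunP => t; rewrite !ffunE subnn. Qed.

Lemma mem_box k l : (l \in box k) = vle l k.
Proof.
rewrite /box mem_filter andb_idr // => h.
apply/mapP; exists [ffun t => inord (l t) : 'I_(\max_(t < d) k t).+1]; first by rewrite mem_enum.
apply/ffunP => t; rewrite !ffunE inordK // ltnS.
apply: leq_trans (leq_bigmax t); by move/vleP: h.
Qed.

Lemma uniq_box k : uniq (box k).
Proof.
rewrite /box filter_uniq // map_inj_uniq ?enum_uniq // => f g /ffunP e.
apply/ffunP => t; apply/val_inj; move: (e t); by rewrite !ffunE.
Qed.

End Vec.

Lemma mem_boxP d (k l : vec d) : reflect (vle l k) (l \in box k).
Proof. by rewrite mem_box; apply: idP. Qed.

Lemma vle_subr d (a b c : vec d) : vle b c -> vle (vsub b a) (vsub c a).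
Proof. move=> /vleP h2; apply/vleP => t; rewrite !ffunE; move: (h2 t); lia. Qed.

Lemma vle_addsub d (a b k : vec d) : vle a k -> vle b (vsub k a) -> vle (vadd a b) k.
Proof. move=> /vleP h1 /vleP h2; apply/vleP => t; rewrite !ffunE; move: (h1 t) (h2 t); rewrite ffunE; lia. Qed.



Lemma sum_pred1_seq (T : eqType) (V : nmodType) (r : seq T) (x : T) (F : T -> V) :
  uniq r -> x \in r -> \sum_(y <- r | y == x) F y = F x.
Proof. by move=> u xr; rewrite -big_filter filter_pred1_uniq // big_seq1. Qed.

Section Conv.
Variables (R : nzRingType) (d s : nat).
Implicit Types A B C E : mseq R d s.
Implicit Types a b k l : vec d.

Lemma mconvE A B k : mconv A B k = \sum_(l <- box k) A l *m B (vsub k l).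
Proof.
rewrite /mconv big_seq [RHS]big_seq; apply: eq_bigr => l; rewrite mem_box => lk.
rewrite (eq_bigl (fun l' => l' == vsub k l)) ?sum_pred1_seq ?uniq_box ?mem_box ?vle_sub //.
move=> l' /=; apply/eqP/eqP => [<-|->]; by [rewrite vaddK | rewrite vsubK].
Qed.

Lemma mconv_local A A' B B' k :
  (forall l, vle l k -> A l = A' l) -> (forall l, vle l k -> B l = B' l) ->
  mconv A B k = mconv A' B' k.
Proof.
move=> hA hB; rewrite !mconvE big_seq [RHS]big_seq; apply: eq_bigr => l.
by rewrite mem_box => lk; rewrite hA // hB // vle_sub.
Qed.

Lemma perm_box_sub k l : vle l k -> perm_eq (box l) [seq a <- box k | vle a l].
Proof.
move=> lk; apply: (@uniq_perm (vec d)).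
- exact: uniq_box.
- by rewrite filter_uniq // uniq_box.
move=> a; apply/idP/idP => [/mem_boxP h|]; rewrite mem_filter.
  by rewrite h /=; apply/mem_boxP; apply: vle_trans h lk.
by case/andP => h _; apply/mem_boxP.
Qed.

Lemma sum_box_sub (V : nmodType) k l (F : vec d -> V) : vle l k ->
  \sum_(a <- box l) F a = \sum_(a <- box k | vle a l) F a.
Proof. by move=> lk; rewrite (perm_big _ (perm_box_sub lk)) big_filter. Qed.

Lemma perm_box_shift k a : vle a k ->
  perm_eq [seq l <- box k | vle a l] (map (vadd a) (box (vsub k a))).
Proof.
move=> ak; apply: (@uniq_perm (vec d)).
- by rewrite filter_uniq // uniq_box.
- rewrite map_inj_uniq ?uniq_box // => x y e.
  by rewrite -(vaddK a x) e vaddK.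
move=> l; rewrite mem_filter; apply/andP/mapP => [[al /mem_boxP lk]|[b]].
  exists (vsub l a); last by rewrite vsubK.
  by apply/mem_boxP; apply: vle_subr.
move=> /mem_boxP bk ->; split; first exact: vle_addr.
by apply/mem_boxP; apply: vle_addsub.
Qed.

Lemma sum_box_shift (V : nmodType) k a (G : vec d -> V) : vle a k ->
  \sum_(l <- box k | vle a l) G l = \sum_(b <- box (vsub k a)) G (vadd a b).
Proof. by move=> ak; rewrite -big_filter (perm_big _ (perm_box_shift ak)) big_map. Qed.

Lemma vsubD k a b : vsub k (vadd a b) = vsub (vsub k a) b.
Proof. by apply/ffunP => t; rewrite !ffunE subnDA. Qed.

Lemma mconvA A B C : mconv A (mconv B C) = mconv (mconv A B) C.
Proof.
apply: funext => k; rewrite !mconvE.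
transitivity (\sum_(a <- box k) \sum_(l <- box k | vle a l)
                 A a *m (B (vsub l a) *m C (vsub k l))).
  rewrite big_seq [RHS]big_seq; apply: eq_bigr => a; rewrite mem_box => ak.
  rewrite mconvE mulmx_sumr sum_box_shift //; apply: eq_bigr => b _.
  by rewrite vaddK vsubD.
transitivity (\sum_(l <- box k) \sum_(a <- box k | vle a l)
                 A a *m (B (vsub l a) *m C (vsub k l))).
  by rewrite (exchange_big_dep xpredT).
rewrite big_seq [RHS]big_seq; apply: eq_bigr => l; rewrite mem_box => lk.
rewrite mconvE mulmx_suml (sum_box_sub _ lk); apply: eq_bigr => a _.
by rewrite mulmxA.
Qed.

Lemma mconv1 A : mconv A (Id_seq R d s) = A.
Proof.
apply: funext => k; rewrite mconvE (bigD1_seq k) ?mem_box ?vle_refl ?uniq_box //=.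
rewrite /Id_seq vsubxx eqxx mulmx1 big_seq_cond big1 ?addr0 // => l /andP[].
rewrite mem_box => lk lnk; case: ifP; last by rewrite mulmx0.
move/eqP => e; case/negP: lnk; apply/eqP; rewrite -(vsubK lk) e vadd0 //.
Qed.

Lemma mconv1l A : mconv (Id_seq R d s) A = A.
Proof.
apply: funext => k; rewrite mconvE (bigD1_seq (vzero d)) ?mem_box ?vle0 ?uniq_box //=.
rewrite /Id_seq eqxx mul1mx vsub0 big1 ?addr0 // => l lnk.
by rewrite (negbTE lnk) mul0mx.
Qed.

Lemma mconvDl A B C : mconv (madd A B) C = madd (mconv A C) (mconv B C).
Proof.
apply: funext => k; rewrite /madd !mconvE -big_split /=; apply: eq_bigr => l _.
by rewrite mulmxDl.
Qed.

Lemma mconvDr A B C : mconv A (madd B C) = madd (mconv A B) (mconv A C).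
Proof.
apply: funext => k; rewrite /madd !mconvE -big_split /=; apply: eq_bigr => l _.
by rewrite mulmxDr.
Qed.
End Conv.


Section Pow.
Variables (R : nzRingType) (d s : nat).
Implicit Types A B C E : mseq R d s.
Implicit Types a b k l : vec d.

Lemma cpowS_r E n : conv_pow E n.+1 = mconv (conv_pow E n) E.
Proof.
elim: n => [|n IH]; first by rewrite /= mconv1 mconv1l.
transitivity (mconv E (conv_pow E n.+1)); first by [].
by rewrite [in LHS]IH mconvA.
Qed.

Lemma cpow_nil E : E (vzero d) = 0 ->
  forall n k, (vnorm k < n)%N -> conv_pow E n k = 0.
Proof.
move=> E0; elim=> [//|n IH] k kn /=; rewrite mconvE big_seq big1 // => l.
move/mem_boxP => lk; case: (eqVneq l (vzero d)) => [->|ln0]; first by rewrite E0 mul0mx.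
rewrite IH ?mulmx0 // vnorm_sub //.
have : (0 < vnorm l)%N by rewrite lt0n vnorm0.
have := vnorm_le lk; lia.
Qed.

Lemma mconv_sumr A (F : nat -> mseq R d s) N k :
  mconv A (fun l => \sum_(0 <= n < N) F n l) k = \sum_(0 <= n < N) mconv A (F n) k.
Proof.
rewrite mconvE; under eq_bigr do rewrite mulmx_sumr.
rewrite exchange_big /=; apply: eq_bigr => n _; by rewrite mconvE.
Qed.

Lemma mconv_suml A (F : nat -> mseq R d s) N k :
  mconv (fun l => \sum_(0 <= n < N) F n l) A k = \sum_(0 <= n < N) mconv (F n) A k.
Proof.
rewrite mconvE; under eq_bigr do rewrite mulmx_suml.
rewrite exchange_big /=; apply: eq_bigr => n _; by rewrite mconvE.
Qed.

Lemma mconvBr A B C k : mconv A (msub B C) k = mconv A B k - mconv A C k.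
Proof.
rewrite !mconvE -sumrB; apply: eq_bigr => l _; by rewrite /msub mulmxBr.
Qed.

Lemma mconvBl A B C k : mconv (msub B C) A k = mconv B A k - mconv C A k.
Proof.
rewrite !mconvE -sumrB; apply: eq_bigr => l _; by rewrite /msub mulmxBl.
Qed.

Definition Ser E : mseq R d s :=
  fun k => \sum_(0 <= n < (vnorm k).+1) conv_pow E n k.

Lemma Ser_trunc E k N : E (vzero d) = 0 -> (vnorm k < N)%N ->
  Ser E k = \sum_(0 <= n < N) conv_pow E n k.
Proof.
move=> E0 kN; rewrite /Ser [RHS](big_cat_nat _ (n := (vnorm k).+1)) //=.
rewrite [X in _ = _ + X](_ : _ = 0) ?addr0 //.
by rewrite big_nat big1 // => n /andP[h _]; rewrite cpow_nil.
Qed.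

Lemma Ser_inv E : E (vzero d) = 0 ->
  mconv (Ser E) (msub (Id_seq R d s) E) = Id_seq R d s /\
  mconv (msub (Id_seq R d s) E) (Ser E) = Id_seq R d s.
Proof.
move=> E0; split; apply: funext => k.
- rewrite (mconv_local (A' := fun l => \sum_(0 <= n < (vnorm k).+1) conv_pow E n l)
     (B' := msub (Id_seq R d s) E)); first last.
  + by [].
  + by move=> l lk; apply: Ser_trunc => //; rewrite ltnS vnorm_le.
  rewrite mconv_suml.
  rewrite (telescope_sumr_eq (fun n => - conv_pow E n k)) //.
    by rewrite opprK cpow_nil // addrC /= subr0.
  move=> n _; rewrite mconvBr mconv1 -cpowS_r opprK addrC.
  by [].
- rewrite (mconv_local (A' := msub (Id_seq R d s) E)
     (B' := fun l => \sum_(0 <= n < (vnorm k).+1) conv_pow E n l)); first last.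
  + by move=> l lk; apply: Ser_trunc => //; rewrite ltnS vnorm_le.
  + by [].
  rewrite mconv_sumr.
  rewrite (telescope_sumr_eq (fun n => - conv_pow E n k)) //.
    by rewrite opprK cpow_nil // addrC /= subr0.
  move=> n _; rewrite mconvBl mconv1l opprK addrC.
  by [].
Qed.
End Pow.


Section Renewal.
Variables (R : nzRingType) (d s : nat).
Implicit Types A B C E : mseq R d s.
Variable q : mseq R d s.
Hypothesis q0 : q (vzero d) = 0.

Lemma conv_entry A B k a c :
  mconv A B k a c = \sum_(l <- box k) \sum_b A l a b * B (vsub k l) b c.
Proof.
rewrite mconvE summxE; apply: eq_bigr => l _; by rewrite mxE.
Qed.

Definition Aj (j : 'I_s) : mseq R d s :=
  fun k => \matrix_(a, c) (if c == j then 0 else q k a c).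
Definition Bj (j : 'I_s) : mseq R d s :=
  fun k => \matrix_(a, c) (if c == j then q k a c else 0).

Lemma Aj0 j : Aj j (vzero d) = 0.
Proof. by apply/matrixP => a c; rewrite !mxE q0 mxE; case: ifP. Qed.

Lemma AjBj j : madd (Aj j) (Bj j) = q.
Proof.
apply: funext => k; apply/matrixP => a c; rewrite /madd !mxE.
by case: ifP; rewrite ?add0r ?addr0.
Qed.

Lemma cpow_Aj_col j n k a : conv_pow (Aj j) n.+1 k a j = 0.
Proof.
rewrite cpowS_r conv_entry big1 // => l _; apply: big1 => b _.
by rewrite mxE eqxx mulr0.
Qed.

Lemma Ser_Aj_col j k a : Ser (Aj j) k a j = Id_seq R d s k a j.
Proof.
rewrite /Ser summxE big_nat_recl // big1_seq ?addr0 //= => n _.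
exact: cpow_Aj_col.
Qed.

Lemma conv_Bj X j l a c : mconv X (Bj j) l a c = if c == j then mconv X q l a c else 0.
Proof.
rewrite !conv_entry; case: ifP => cj.
  by apply: eq_bigr => l' _; apply: eq_bigr => b _; rewrite mxE cj.
by apply: big1 => l' _; apply: big1 => b _; rewrite mxE cj mulr0.
Qed.

Lemma renewal_mx :
  let U := Ser q in
  forall j, U = madd (Ser (Aj j)) (mconv (mconv (Ser (Aj j)) (Bj j)) U).
Proof.
move=> U j; set W := Ser (Aj j); set V := madd W (mconv (mconv W (Bj j)) U).
have [Uinv1 Uinv2] := Ser_inv q0.
have [Winv1 Winv2] := Ser_inv (Aj0 j).
have e1 : msub (Id_seq R d s) (Aj j) = madd (msub (Id_seq R d s) q) (Bj j).
  apply: funext => k; rewrite /msub /madd -(AjBj j) /madd.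
  by rewrite opprD addrA addrNK.
have VI : mconv V (msub (Id_seq R d s) q) = Id_seq R d s.
  rewrite /V mconvDl -(mconvA (mconv W (Bj j)) U) Uinv1 mconv1 -mconvDr -e1.
  exact: Winv1.
by rewrite -[LHS]mconv1l -VI -mconvA Uinv2 mconv1.
Qed.

Lemma renewal_entry j k a :
  Ser q k a j = Id_seq R d s k a j +
     \sum_(l <- box k) mconv (Ser (Aj j)) q l a j * Ser q (vsub k l) j j.
Proof.
rewrite {1}(renewal_mx j) /madd mxE Ser_Aj_col; congr (_ + _).
rewrite conv_entry; apply: eq_bigr => l _.
rewrite (bigD1 j) //= big1 ?addr0; first by rewrite conv_Bj eqxx.
by move=> c cj; rewrite conv_Bj (negbTE cj) mul0r.
Qed.

End Renewal.

Local Open Scope classical_set_scope.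

Section MRC.
Variables (R : realType) (d s : nat) (dT : measure_display) (T : measurableType dT)
  (P : 'I_s -> probability T R) (J : nat -> T -> 'I_s) (S : nat -> T -> vec d)
  (q : mseq R d s).
Hypothesis HM : is_MRC P J S q.
Variable i : 'I_s.

Lemma mJ n j : measurable [set w | J n w = j]. Proof. by case: HM. Qed.
Lemma mS n k : measurable [set w | S n w = k]. Proof. by case: HM => _ []. Qed.

Definition pr (A : set T) : R := fine (P i A).

Lemma prE A : measurable A -> P i A = (pr A)%:E.
Proof.
move=> mA; rewrite /pr fineK // ge0_fin_numE ?measure_ge0 //.
by apply: le_lt_trans (probability_le1 _ mA) _; exact: ltey.
Qed.

Lemma meas_count (U : countType) (f : T -> U) (Phi : set U) :
  (forall x, measurable [set w | f w = x]) -> measurable [set w | Phi (f w)].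
Proof.
move=> hf.
have -> : [set w | Phi (f w)] = \bigcup_x [set w | f w = x /\ Phi x].
  apply/seteqP; split => w /=; first by move=> h; exists (f w).
  by case=> x _ [<-].
apply: countable_bigcupT_measurable; first exact: countableP.
move=> x; case: (pselect (Phi x)) => h.
  have -> : [set w | f w = x /\ Phi x] = [set w | f w = x] by apply/seteqP; split => w /= [].
  exact: hf.
have -> : [set w | f w = x /\ Phi x] = set0 by apply/seteqP; split => w /= [].
exact: measurable0.
Qed.

Definition histn n w : seq ('I_s * vec d) := [seq (J m w, S m w) | m <- iota 0 n].

Lemma histnS n w : histn n.+1 w = rcons (histn n w) (J n w, S n w).
Proof. by rewrite /histn -addn1 iotaD map_cat /= cats1. Qed.

Lemma size_histn n w : size (histn n w) = n.
Proof. by rewrite size_map size_iota. Qed.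

Lemma nth_histn n w m x0 : (m < n)%N -> nth x0 (histn n w) m = (J m w, S m w).
Proof. by move=> mn; rewrite (nth_map 0%N) ?size_iota // nth_iota. Qed.

Lemma m_histn n h : measurable [set w | histn n w = h].
Proof.
elim: n h => [|n IH] h.
  case: h => [|x h].
    by have -> : [set w | histn 0 w = [::]] = setT by apply/seteqP; split.
  by have -> : [set w | histn 0 w = x :: h] = set0 by apply/seteqP; split.
case/lastP: h => [|h x].
  have -> : [set w | histn n.+1 w = [::]] = set0; last exact: measurable0.
  by apply/seteqP; split => w //=; rewrite histnS; case: (histn n w).
have -> : [set w | histn n.+1 w = rcons h x] =
    [set w | histn n w = h] `&` ([set w | J n w = x.1] `&` [set w | S n w = x.2]).
  apply/seteqP; split => w /=; rewrite histnS.
    by move/rcons_inj => [-> <-].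
  by case: x => a b /= [-> [-> ->]].
by apply: measurableI => //; apply: measurableI; [exact: mJ | exact: mS].
Qed.

Lemma m_hist n (Phi : set (seq ('I_s * vec d))) : measurable [set w | Phi (histn n w)].
Proof. by apply: meas_count; exact: m_histn. Qed.

Lemma m_J n (Phi : set 'I_s) : measurable [set w | Phi (J n w)].
Proof. by apply: meas_count; exact: mJ. Qed.

Lemma m_S n (Phi : set (vec d)) : measurable [set w | Phi (S n w)].
Proof. by apply: meas_count; exact: mS. Qed.

Lemma m_SS n (Phi : set (vec d * vec d)) : measurable [set w | Phi (S n w, S n.+1 w)].
Proof.
apply: (@meas_count _ (fun w => (S n w, S n.+1 w))) => -[a b].
have -> : [set w | (S n w, S n.+1 w) = (a, b)] = [set w | S n w = a] `&` [set w | S n.+1 w = b].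
  by apply/seteqP; split => w /=; [case=> -> -> | case=> -> ->].
by apply: measurableI; exact: mS.
Qed.

Definition Nb := [set w | J 0 w <> i \/ S 0 w <> vzero d \/ exists n, ~~ vlt (S n w) (S n.+1 w)].

Lemma null_compl (A : set T) : measurable A -> P i A = 1%E -> (P i).-negligible (~` A).
Proof.
move=> mA PA; exists (~` A); split => //; first exact: measurableC.
by rewrite probability_setC // PA subee.
Qed.

Lemma Nb_null : exists M, [/\ measurable M, P i M = 0%E & Nb `<=` M].
Proof.
have h1 : (P i).-negligible [set w | J 0 w <> i].
  have -> : [set w | J 0 w <> i] = ~` [set w | J 0 w = i] by [].
  by apply: null_compl; [exact: mJ | case: HM => _ [_ []]].
have h2 : (P i).-negligible [set w | S 0 w <> vzero d].
  have -> : [set w | S 0 w <> vzero d] = ~` [set w | S 0 w = vzero d] by [].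
  by apply: null_compl; [exact: mS | case: HM => _ [_ [_ []]]].
have h3 : (P i).-negligible (\bigcup_n [set w | ~~ vlt (S n w) (S n.+1 w)]).
  apply: negligible_bigcup => n.
  have -> : [set w | ~~ vlt (S n w) (S n.+1 w)] = ~` [set w | vlt (S n w) (S n.+1 w)].
    by apply/seteqP; split => w /=; case: (vlt _ _).
  apply: null_compl; first by apply: (@m_SS n (fun x => vlt x.1 x.2)).
  by case: HM => _ [_ [_ [_ []]]].
have [M [mM PM sub]] := negligibleU (negligibleU h1 h2) h3.
exists M; split => // w [h|[h|[n h]]]; apply: sub; [left; left | left; right | right] => //.
by exists n.
Qed.


Lemma pr_setU A B : measurable A -> measurable B -> A `&` B = set0 ->
  pr (A `|` B) = pr A + pr B.
Proof.
move=> mA mB AB; apply: EFin_inj; rewrite EFinD -!prE //; try exact: measurableU.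
exact: measureU.
Qed.

Lemma pr0 : pr set0 = 0.
Proof. by rewrite /pr measure0. Qed.

Lemma prT : pr setT = 1.
Proof. by rewrite /pr probability_setT. Qed.

Lemma pr_as A B : measurable A -> measurable B -> B `<=` A ->
  (forall w, A w -> ~ Nb w -> B w) -> pr A = pr B.
Proof.
move=> mA mB BA h.
have eA : A = B `|` (A `&` ~` B).
  apply/seteqP; split => w; last by case=> [/BA|[]].
  by move=> Aw; case: (pselect (B w)) => Bw; [left | right].
have mAB : measurable (A `&` ~` B) by apply: measurableI => //; exact: measurableC.
rewrite eA pr_setU //; last by apply/seteqP; split => w // [Bw [_ /(_ Bw)]].
have [M [mM PM NM]] := Nb_null.
suff -> : pr (A `&` ~` B) = 0 by rewrite addr0.
have h0 : P i (A `&` ~` B) = 0%E.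
  apply/le_anti/andP; split; last exact: measure_ge0.
  rewrite -PM; apply: le_measure; rewrite ?inE //.
  move=> w [Aw nBw]; apply: NM; case: (pselect (Nb w)) => // nN.
  by case: nBw; apply: h.
by rewrite /pr h0.
Qed.

Lemma m_union (I : eqType) (r : seq I) (F : I -> set T) :
  (forall x, measurable (F x)) -> measurable [set w | exists2 x, x \in r & F x w].
Proof.
move=> mF; elim: r => [|y r' IHr].
  by have -> : [set w | exists2 x, x \in [::] & F x w] = set0 by apply/seteqP; split => w //= [].
have -> : [set w | exists2 x, x \in y :: r' & F x w] =
   F y `|` [set w | exists2 x, x \in r' & F x w].
  apply/seteqP; split => w /=.
    by case=> z; rewrite inE => /orP[/eqP -> |]; [left | right; exists z].
  by case=> [Fy|[z zr Fz]]; [exists y; rewrite ?inE ?eqxx | exists z; rewrite ?inE ?zr ?orbT].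
exact: measurableU.
Qed.

Lemma pr_seq (I : eqType) (r : seq I) (F : I -> set T) : uniq r ->
  (forall x, measurable (F x)) -> (forall x y, x != y -> F x `&` F y = set0) ->
  pr [set w | exists2 x, x \in r & F x w] = \sum_(x <- r) pr (F x).
Proof.
move=> ur mF dF; elim: r ur => [|x r IH] /=.
  move=> _; rewrite big_nil -pr0; congr pr; apply/seteqP; split => w //=.
  by case.
case/andP => xr ur; rewrite big_cons -IH //.
have mU : forall r : seq I, measurable [set w | exists2 x, x \in r & F x w].
  move=> r'; elim: r' => [|y r' IHr].
    by have -> : [set w | exists2 x, x \in [::] & F x w] = set0 by apply/seteqP; split => w //= [].
  have -> : [set w | exists2 x, x \in y :: r' & F x w] =
     F y `|` [set w | exists2 x, x \in r' & F x w].
    apply/seteqP; split => w /=.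
      by case=> z; rewrite inE => /orP[/eqP -> |]; [left | right; exists z].
    by case=> [Fy|[z zr Fz]]; [exists y; rewrite ?inE ?eqxx | exists z; rewrite ?inE ?zr ?orbT].
  exact: measurableU.
rewrite -pr_setU //.
  congr pr; apply/seteqP; split => w /=.
    by case=> z; rewrite inE => /orP[/eqP -> |]; [left | right; exists z].
  by case=> [Fy|[z zr Fz]]; [exists x; rewrite ?inE ?eqxx | exists z; rewrite ?inE ?zr ?orbT].
apply/seteqP; split => w // [Fx [z zr Fz]].
have xz : x != z by apply: contraNneq xr => ->.
by move: (dF _ _ xz) => /seteqP[+ _] => /(_ w) /=; apply.
Qed.

Lemma good_lt w n : ~ Nb w -> vlt (S n w) (S n.+1 w).
Proof.
move=> g; case: (boolP (vlt (S n w) (S n.+1 w))) => // h.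
by case: g; right; right; exists n.
Qed.

Lemma good_le w m n : ~ Nb w -> (m <= n)%N -> vle (S m w) (S n w).
Proof.
move=> g; elim: n => [|n IH]; first by rewrite leqn0 => /eqP ->; exact: vle_refl.
rewrite leq_eqVlt => /orP[/eqP -> |]; first exact: vle_refl.
rewrite ltnS => /IH h; apply: vle_trans h _.
by case/andP: (good_lt n g).
Qed.

Lemma good_norm w n : ~ Nb w -> (n <= vnorm (S n w))%N.
Proof.
move=> g; elim: n => [|n IH] //.
by apply: leq_ltn_trans IH (vlt_norm (good_lt n g)).
Qed.

Lemma good_J0 w : ~ Nb w -> J 0 w = i.
Proof. by move=> g; case: (pselect (J 0 w = i)) => // h; case: g; left. Qed.

Lemma good_S0 w : ~ Nb w -> S 0 w = vzero d.
Proof. by move=> g; case: (pselect (S 0 w = vzero d)) => // h; case: g; right; left. Qed.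

Definition XS (k : vec d) : seq ('I_s * vec d) := [seq (b, l) | b <- enum 'I_s, l <- box k].

Fixpoint Lh (k : vec d) (m : nat) : seq (seq ('I_s * vec d)) :=
  if m is m'.+1 then [seq rcons h x | h <- Lh k m', x <- XS k] else [:: [::]].

Lemma mem_Lh k m h : size h = m -> all (fun x => x.2 \in box k) h -> h \in Lh k m.
Proof.
elim: m h => [|m IH] h.
  by case: h.
case/lastP: h => [//|h x]; rewrite size_rcons all_rcons => -[sh] /andP[xk hk] /=.
apply: (allpairs_f (fun h x => rcons h x)); first exact: IH.
case: x xk => b l /= lk.
by rewrite /XS; apply: (allpairs_f (fun b l => (b, l))); rewrite ?mem_enum.
Qed.

Lemma Lh_mem k m h : h \in Lh k m -> size h = m /\ all (fun x => x.2 \in box k) h.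
Proof.
elim: m h => [|m IH] h /=.
  by rewrite inE => /eqP ->.
case/allpairsP => -[h' x] /= [h'L xX ->].
have [sh ah] := IH _ h'L.
rewrite size_rcons all_rcons sh ah andbT; split => //.
by case/allpairsP: xX => -[b l] /= [_ lk ->].
Qed.

Definition Lu k m := undup (Lh k m).

Lemma pr_decomp n k (A : set T) : measurable A ->
  (forall w, A w -> ~ Nb w -> vle (S n w) k) ->
  pr A = \sum_(h <- Lu k n.+1) pr [set w | A w /\ histn n.+1 w = h].
Proof.
move=> mA hk.
rewrite (@pr_as A [set w | exists2 h, h \in Lu k n.+1 & (A w /\ histn n.+1 w = h)]) //.
- apply: pr_seq; first exact: undup_uniq.
    by move=> h; apply: measurableI => //; exact: m_histn.
  move=> x y xy; apply/seteqP; split => w //= [[_ e1] [_ e2]].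
  by move: xy; rewrite -e1 -e2 eqxx.
- have -> : [set w | exists2 h, h \in Lu k n.+1 & (A w /\ histn n.+1 w = h)] =
     A `&` [set w | histn n.+1 w \in Lu k n.+1].
    apply/seteqP; split => w /=; first by case=> h hL [Aw ->]; split.
    by case=> Aw hL; exists (histn n.+1 w).
  apply: measurableI => //; exact: (m_hist n.+1 (fun h => h \in Lu k n.+1)).
- by move=> w [h _ []].
move=> w Aw g; exists (histn n.+1 w) => //.
rewrite mem_undup; apply: mem_Lh; first exact: size_histn.
apply/allP => x /mapP [m]; rewrite mem_iota add0n ltnS => /andP[_ mn] -> /=.
apply/mem_boxP; apply: vle_trans (good_le g mn) (hk w Aw g).
Qed.


Lemma mPJS m (Phi : set (seq ('I_s * vec d))) a b k :
  measurable [set w | Phi (histn m w) /\ J a w = b /\ S a w = k].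
Proof.
apply: measurableI; first exact: (m_hist m Phi).
by apply: measurableI; [exact: mJ | exact: mS].
Qed.

Lemma mPh m (Phi : set (seq ('I_s * vec d))) h :
  measurable [set w | Phi (histn m w) /\ histn m w = h].
Proof. by apply: measurableI; [exact: (m_hist m Phi) | exact: m_histn]. Qed.

Let x0 : 'I_s * vec d := (i, vzero d).

Lemma cyl_eq h n w : size h = n.+1 ->
  (histn n.+1 w = h <-> forall m, (m <= n)%N -> J m w = (nth x0 h m).1 /\ S m w = (nth x0 h m).2).
Proof.
move=> sh; split.
  by move=> <- m mn; rewrite nth_histn.
move=> H; apply: (@eq_from_nth _ x0); first by rewrite size_histn sh.
move=> m; rewrite size_histn ltnS => mn; rewrite nth_histn //.
by have [-> ->] := H m mn; case: nth.
Qed.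

Lemma sum_pair_pick (V : nmodType) k (x : 'I_s * vec d) (F : 'I_s -> vec d -> V) :
  x.2 \in box k ->
  \sum_(b : 'I_s) \sum_(k0 <- box k) (if x == (b, k0) then F b k0 else 0) = F x.1 x.2.
Proof.
move=> xk; rewrite (bigD1 x.1) //=.
rewrite [X in _ + X](_ : _ = 0) ?addr0; last first.
  apply: big1 => b nb; apply: big1 => k0 _; case: ifP => // /eqP ex.
  by move: nb; rewrite ex eqxx.
rewrite (eq_bigr (fun k0 => if k0 == x.2 then F x.1 k0 else 0)); last first.
  move=> k0 _; case: x xk => c l /= _.
  by rewrite xpair_eqE eqxx /= eq_sym; case: eqP => // ->.
by rewrite -big_mkcond sum_pred1_seq // uniq_box.
Qed.

Lemma markov n (Phi : set (seq ('I_s * vec d))) b' k :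
  pr [set w | Phi (histn n.+1 w) /\ J n.+1 w = b' /\ S n.+1 w = k] =
  \sum_(b : 'I_s) \sum_(k0 <- box k)
     pr [set w | Phi (histn n.+1 w) /\ J n w = b /\ S n w = k0] * q (vsub k k0) b b'.
Proof.
rewrite (@pr_decomp n k); first last.
- move=> w [_ [_ <-]] g; by case/andP: (good_lt n g).
- exact: mPJS.
set X := fun h => pr [set w | Phi (histn n.+1 w) /\ histn n.+1 w = h].
have claim2 : forall b k0, vle k0 k ->
    pr [set w | Phi (histn n.+1 w) /\ J n w = b /\ S n w = k0] =
    \sum_(h <- Lu k n.+1) (if nth x0 h n == (b, k0) then X h else 0).
  move=> b k0 k0k; rewrite (@pr_decomp n k); first last.
  - by move=> w [_ [_ ->]].
  - exact: mPJS.
  rewrite big_seq [RHS]big_seq; apply: eq_bigr => h hL.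
  case: ifP => [/eqP e|/negbT ne].
    congr pr; apply/seteqP; split => w /=; first by case=> -[? _] ?.
    case=> Pw hw; split => //; move: (@nth_histn n.+1 w n x0 (ltnSn n)); rewrite hw e.
    by case=> <- <-; rewrite -hw.
  rewrite -pr0; congr pr; apply/seteqP; split => w //= [[_ [Jw Sw]] hw].
  by move: ne; rewrite -hw nth_histn // Jw Sw eqxx.
transitivity (\sum_(h <- Lu k n.+1) X h * q (vsub k (nth x0 h n).2) (nth x0 h n).1 b').
  rewrite big_seq [RHS]big_seq; apply: eq_bigr => h.
  rewrite mem_undup => /Lh_mem [sh ah].
  have hk : vle (nth x0 h n).2 k.
    by apply/mem_boxP; apply: (allP ah); apply: mem_nth; rewrite sh.
  case: (pselect (Phi h)) => Ph; last first.
    rewrite /X.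
    have -> : [set w | Phi (histn n.+1 w) /\ histn n.+1 w = h] = set0.
      by apply/seteqP; split => w //= [+ e]; rewrite e.
    rewrite pr0 mul0r -pr0; congr pr; apply/seteqP; split => w //= [[+ _] e].
    by rewrite e.
  have e1 : [set w | (Phi (histn n.+1 w) /\ J n.+1 w = b' /\ S n.+1 w = k) /\ histn n.+1 w = h]
     = [set w | (forall m, (m <= n)%N -> J m w = (nth x0 h m).1 /\ S m w = (nth x0 h m).2)
           /\ J n.+1 w = b' /\ S n.+1 w = vadd (nth x0 h n).2 (vsub k (nth x0 h n).2)].
    rewrite vsubK //; apply/seteqP; split => w /=.
      by case=> -[_ [-> ->]] /(cyl_eq _ sh).
    by case=> /(cyl_eq _ sh) hw [-> ->]; rewrite hw.
  have e2 : [set w | Phi (histn n.+1 w) /\ histn n.+1 w = h]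
     = [set w | forall m, (m <= n)%N -> J m w = (nth x0 h m).1 /\ S m w = (nth x0 h m).2].
    apply/seteqP; split => w /=; first by case=> _ /(cyl_eq _ sh).
    by move=> /(cyl_eq _ sh) hw; rewrite hw.
  apply: EFin_inj; rewrite EFinM /X -!prE; last 2 first.
  - exact: mPh.
  - by apply: measurableI; [exact: mPJS | exact: m_histn].
  rewrite e1 e2.
  by case: HM => _ [_ [_ [_ [_ ]]]] => /(_ i n (fun m => (nth x0 h m).1) (fun m => (nth x0 h m).2)).
rewrite big_seq [RHS](eq_bigr (fun b => \sum_(k0 <- box k) \sum_(h <- Lu k n.+1)
   (if nth x0 h n == (b, k0) then X h * q (vsub k k0) b b' else 0))); last first.
  move=> b _; rewrite big_seq [RHS]big_seq; apply: eq_bigr => k0 /mem_boxP k0k.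
  rewrite claim2 // mulr_suml; apply: eq_bigr => h _.
  by case: ifP; rewrite ?mul0r.
rewrite (eq_bigr (fun b => \sum_(h <- Lu k n.+1) \sum_(k0 <- box k)
   (if nth x0 h n == (b, k0) then X h * q (vsub k k0) b b' else 0))); last first.
  by move=> b _; rewrite exchange_big.
rewrite exchange_big /= big_seq; apply: eq_bigr => h.
rewrite mem_undup => /Lh_mem [sh ah].
rewrite (@sum_pair_pick _ k (nth x0 h n) (fun b k0 => X h * q (vsub k k0) b b')) //.
by apply: (allP ah); apply: mem_nth; rewrite sh.
Qed.


Lemma mJS a b k : measurable [set w | J a w = b /\ S a w = k].
Proof. by apply: measurableI; [exact: mJ | exact: mS]. Qed.

Lemma base0 b k : pr [set w | J 0 w = b /\ S 0 w = k] = Id_seq R d s k i b.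
Proof.
rewrite /Id_seq; case: (eqVneq k (vzero d)) => [->|kn0].
  rewrite mxE; case: (eqVneq i b) => [<-|ib].
    rewrite (_ : true%:R = 1) // -prT; symmetry; apply: pr_as => //; try exact: mJS.
    by move=> w _ g; split; [exact: good_J0 | exact: good_S0].
  rewrite (_ : false%:R = 0) // -pr0; apply: pr_as => //; try exact: mJS.
  by move=> w [Jw _] g; move: ib; rewrite -Jw good_J0 // eqxx.
rewrite mxE -pr0; apply: pr_as => //; try exact: mJS.
by move=> w [_ Sw] g; move: kn0; rewrite -Sw good_S0 // eqxx.
Qed.

Lemma step n (Phi : set (seq ('I_s * vec d))) b k (Y : mseq R d s) :
  (forall b0 k0, pr [set w | Phi (histn n.+1 w) /\ J n w = b0 /\ S n w = k0] = Y k0 i b0) ->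
  pr [set w | Phi (histn n.+1 w) /\ J n.+1 w = b /\ S n.+1 w = k] = mconv Y q k i b.
Proof.
move=> hY; rewrite markov conv_entry exchange_big /=.
by apply: eq_bigr => b0 _; apply: eq_bigr => k0 _; rewrite hY.
Qed.

Lemma distU n b k : pr [set w | J n w = b /\ S n w = k] = conv_pow q n k i b.
Proof.
elim: n b k => [|n IH] b k; first exact: base0.
have -> : [set w | J n.+1 w = b /\ S n.+1 w = k] =
    [set w | setT (histn n.+1 w) /\ J n.+1 w = b /\ S n.+1 w = k].
  by apply/seteqP; split => w /=; [move=> h; split | case].
rewrite cpowS_r; apply: step => b0 k0; rewrite -IH; congr pr.
by apply/seteqP; split => w /=; [case | move=> h; split].
Qed.

Definition Phin (j : 'I_s) n (h : seq ('I_s * vec d)) : Prop :=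
  forall m, (0 < m <= n)%N -> (nth x0 h m).1 != j.

Lemma phi_hist j n w : Phin j n (histn n.+1 w) <-> forall m, (0 < m <= n)%N -> J m w != j.
Proof.
split => h m /[dup] mn /h; rewrite nth_histn //; case/andP: mn => _; by rewrite ltnS.
Qed.

Lemma taboo j n b k :
  pr [set w | Phin j n (histn n.+1 w) /\ J n w = b /\ S n w = k] = conv_pow (Aj q j) n k i b.
Proof.
elim: n b k => [|n IH] b k.
  rewrite -base0; congr pr; apply/seteqP; split => w /=; first by case.
  by move=> h; split => // m /andP[m0 m00]; move: m0; rewrite lt0n -leqn0 m00.
case: (eqVneq b j) => [->|bj].
  rewrite cpow_Aj_col -pr0; congr pr; apply/seteqP; split => w //= [/phi_hist h [Jw _]].
  by move: (h n.+1); rewrite leqnn Jw eqxx => /(_ isT).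
have -> : [set w | Phin j n.+1 (histn n.+2 w) /\ J n.+1 w = b /\ S n.+1 w = k] =
    [set w | Phin j n (histn n.+1 w) /\ J n.+1 w = b /\ S n.+1 w = k].
  apply/seteqP; split => w /= [/phi_hist h [Jw Sw]]; split => //.
    by apply/phi_hist => m /andP[m0 mn]; apply: h; rewrite m0 (leq_trans mn).
  apply/phi_hist => m /andP[m0]; rewrite leq_eqVlt => /orP[/eqP ->|mn].
    by rewrite Jw.
  by apply: h; rewrite m0 -ltnS.
rewrite (step _ _ _ (Y := conv_pow (Aj q j) n)) //.
rewrite cpowS_r !conv_entry; apply: eq_bigr => l _; apply: eq_bigr => c _.
by rewrite mxE (negbTE bj).
Qed.

Lemma fpass j n k :
  pr [set w | Phin j n (histn n.+1 w) /\ J n.+1 w = j /\ S n.+1 w = k] =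
  mconv (conv_pow (Aj q j) n) q k i j.
Proof. by apply: step => b0 k0; exact: taboo. Qed.

Definition Psi j k l (h : seq ('I_s * vec d)) : Prop :=
  [/\ (0 < l)%N, (nth x0 h l).1 = j,
      (forall l', (0 < l' < l)%N -> (nth x0 h l').1 <> j) & (nth x0 h l).2 = k].

Lemma g_entry (q0 : q (vzero d) = 0) j k : gseq P J S k i j = mconv (Ser (Aj q j)) q k i j.
Proof.
set N := (vnorm k).+1.
set F := fun n => [set w | Phin j n (histn n.+1 w) /\ J n.+1 w = j /\ S n.+1 w = k].
have mF : forall n, measurable (F n) by move=> n; exact: mPJS.
set A := [set w | exists l, [/\ (0 < l)%N, J l w = j,
                    (forall l', (0 < l' < l)%N -> J l' w <> j) & S l w = k]].
have mA : measurable A.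
  have -> : A = \bigcup_l [set w | Psi j k l (histn l.+1 w)].
    apply/seteqP; split => w /=; rewrite /Psi.
      case=> l [l0 Jl hl Sl]; exists l => //=; rewrite nth_histn //; split => //.
      move=> l' /andP[l'0 l'l]; rewrite nth_histn /=; last by rewrite ltnS ltnW.
      by apply: hl; rewrite l'0.
    case=> l _ /=; rewrite nth_histn // => -[l0 Jl hl Sl]; exists l; split => //.
    move=> l' /andP[l'0 l'l]; move: (hl l'); rewrite nth_histn /=; last by rewrite ltnS ltnW.
    by rewrite l'0 l'l => /(_ isT).
  by apply: bigcupT_measurable => l; exact: (m_hist l.+1 (Psi j k l)).
rewrite /gseq mxE -/(pr A).
rewrite (@pr_as A [set w | exists2 n, n \in index_iota 0 N & F n w]) //; first last.
- move=> w [l [l0 Jl hl Sl]] g; case: l l0 Jl hl Sl => // n _ Jl hl Sl.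
  exists n.
    rewrite mem_index_iota /= /N ltnS -Sl; apply: leq_trans (good_norm n.+1 g).
    exact: leqnSn.
  split => //; apply/phi_hist => m mn; apply/eqP; apply: hl; by rewrite ltnS.
- move=> w [n _ [/phi_hist h [Jw Sw]]]; exists n.+1; split => //.
  move=> l' /andP[l'0 l'n] e; move: (h l'); rewrite l'0 -ltnS l'n e eqxx.
  by move=> /(_ isT).
- exact: m_union.
rewrite pr_seq //; first last.
- move=> x y xy; apply/seteqP; split => w //= [[/phi_hist hx [Jx _]] [/phi_hist hy [Jy _]]].
  case: (ltngtP x y) xy => // xy _.
    by move: (hy x.+1); rewrite xy Jx eqxx => /(_ isT).
  by move: (hx y.+1); rewrite xy Jy eqxx => /(_ isT).
- exact: iota_uniq.
rewrite (mconv_local (A' := fun l => \sum_(0 <= n < N) conv_pow (Aj q j) n l) (B' := q)) //.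
  rewrite mconv_suml summxE; apply: eq_bigr => n _.
  exact: fpass.
by move=> l lk; apply: Ser_trunc; [exact: Aj0 | rewrite /N ltnS vnorm_le].
Qed.

Lemma q0_row b : q (vzero d) i b = 0.
Proof.
have := (match HM with conj _ (conj _ (conj _ (conj _ (conj _ h)))) => h end)
   i 0%N (fun _ => i) (fun _ => vzero d) b (vzero d).
rewrite vadd0.
set A := [set w | (forall m, (m <= 0)%N -> J m w = i /\ S m w = vzero d) /\
                  J 1 w = b /\ S 1 w = vzero d].
set B := [set w | forall m, (m <= 0)%N -> J m w = i /\ S m w = vzero d].
have mB : measurable B.
  have -> : B = [set w | J 0 w = i /\ S 0 w = vzero d].
    apply/seteqP; split => w /=; first by move/(_ 0%N isT).
    by move=> h m; rewrite leqn0 => /eqP ->.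
  by apply: measurableI; [exact: mJ | exact: mS].
have mA : measurable A.
  by apply: measurableI => //; apply: measurableI; [exact: mJ | exact: mS].
move=> hq; have e : pr A = pr B * q (vzero d) i b by apply: EFin_inj; rewrite EFinM -!prE.
move: e.
have -> : pr A = 0.
  rewrite -pr0; apply: pr_as => // w [h [_ S1]] g.
  move: (good_lt 0 g); rewrite S1; case: (h 0%N isT) => _ ->.
  by rewrite /vlt eqxx andbF.
have -> : pr B = 1.
  rewrite -prT; symmetry; apply: pr_as => // w _ g m.
  by rewrite leqn0 => /eqP ->; rewrite good_J0 // good_S0.
by rewrite mul1r => ->.
Qed.

End MRC.

Unset Implicit Arguments.
Local Close Scope classical_set_scope.

Theorem proposition10 (R : realType) (d s : nat) (dT : measure_display)
  (T : measurableType dT) (P : 'I_s -> probability T R)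
  (J : nat -> T -> 'I_s) (S : nat -> T -> vec d) (q : mseq R d s) :
  is_MRC P J S q ->
  let u := useq q in
  let g := gseq P J S in
  (exists B, conv_inverse (mdg u) B) /\
  u = madd (Id_seq R d s) (mconv g (mdg u)) /\
  (forall B, conv_inverse (mdg u) B -> g = mconv (msub u (Id_seq R d s)) B).
Proof.
move=> HM u g.
have q0 : q (vzero d) = 0 by apply/matrixP => a b; rewrite mxE (q0_row HM).
have uE : u = Ser q.
  apply: funext => k; apply/matrixP => a b; rewrite /u /useq mxE.
  apply: norm_lim_near_cst => //; exists (vnorm k).+1 => // N /= hN.
  by rewrite (Ser_trunc q0 hN) summxE.
have key : u = madd (Id_seq R d s) (mconv g (mdg u)).
  rewrite uE; apply: funext => k; apply/matrixP => a j.
  rewrite /madd mxE (renewal_entry q0); congr (_ + _).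
  rewrite conv_entry; apply: eq_bigr => l _.
  rewrite (bigD1 j) //= big1 ?addr0.
    by rewrite /g (g_entry HM a q0) /mdg mxE eqxx.
  move=> c cj; rewrite /mdg [X in _ * X]mxE ifN ?mulr0 //.
have D0 : mdg u (vzero d) = 1%:M.
  rewrite uE; apply/matrixP => a b; rewrite /mdg /Ser mxE.
  have -> : vnorm (vzero d) = 0%N by apply/eqP; rewrite vnorm0.
  rewrite big_nat1 /= /Id_seq eqxx !mxE.
  by case: (eqVneq a b) => [->|]; rewrite ?eqxx.
set E := msub (Id_seq R d s) (mdg u).
have E0 : E (vzero d) = 0 by rewrite /E /msub D0 /Id_seq eqxx subrr.
have [i1 i2] := Ser_inv E0.
have eD : msub (Id_seq R d s) E = mdg u.
  by apply: funext => k; rewrite /E /msub opprB addrC subrK.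
split; first by exists (Ser E); split; rewrite -eD.
split => // B [hB1 hB2].
have e2 : msub u (Id_seq R d s) = mconv g (mdg u).
  apply: funext => k; rewrite /msub {1}key /madd addrC addKr.
  by [].
by rewrite e2 -mconvA hB2 mconv1.
Qed.
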